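(* Consider the FlexPD-C iterates described in the context with $\beta>0$, integer $T\ge1$ and $0<\alpha<1/\rho(B)$, and let $C=\sum_{t=0}^{T-1}(I-\alpha B)^t$, $M=C^{-1}(I-\alpha B)^T$, $N=\frac{1}{\alpha}(C^{-1}-M)$. Then for every $k\ge0$, \[\alpha\big(\nabla f(x^k)-\nabla f(x^* )\big)=M(x^k-x^{k+1})+\alpha(\beta A'A-N)(x^{k+1}-x^* )-\alpha A'(\lambda^{k+1}-\lambda^* ).\]
   Context: Setting: $n$ agents are connected by a connected undirected graph with edge set $\mathcal E$, $\epsilon=|\mathcal E|$. For $x\in\mathbb R^n$ let $f(x)=\sum_{i=1}^n f_i(x_i)$, where each $f_i:\mathbb R\to\mathbb R$ is twice differentiable with $m\le f_i''\le L$ for constants $0<m\le L$; $\nabla f(x)=(f_1'(x_1),\dots,f_n'(x_n))'$. $A\in\mathbb R^{\epsilon\times n}$ is the edge–node incidence matrix (null space spanned by the all-ones vector). $B\in\mathbb R^{n\times n}$ is symmetric positive semidefinite with the same null space as $A$, off-diagonal entries nonzero only on edges; $\rho(B)$ is its largest eigenvalue. $x^*$ is the unique minimizer of $f$ subject to $Ax=0$ and $\lambda^*$ a Lagrange multiplier with $\nabla f(x^* )+A'\lambda^*=0$, $Ax^*=0$, $Bx^*=0$, chosen in the column space of $A$. FlexPD-C: given $\alpha,\beta>0$, $T\ge1$, $x^0$ arbitrary, $\lambda^0=0$; for $k\ge0$: $x^{k+1,0}=x^k$; for $t=1,\dots,T$, $x^{k+1,t}=x^{k+1,t-1}-\alpha\nabla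 f(x^k)-\alpha A'\lambda^k-\alpha Bx^{k+1,t-1}$; then $x^{k+1}=x^{k+1,T}$, $\lambda^{k+1}=\lambda^k+\beta Ax^{k+1}$. *)

(* Defs.v *)
From HB Require Import structures.
From mathcomp Require Import all_boot all_order all_algebra.
From mathcomp Require Import all_classical all_reals all_analysis.
Set Implicit Arguments. Unset Strict Implicit. Unset Printing Implicit Defensive.
Import Order.TTheory GRing.Theory Num.Theory.
Local Open Scope ring_scope.

Section FlexPD.
Variable R : realType.

(* An undirected graph on nodes 'I_n with eps edges; edge e joins
   (ends e).1 and (ends e).2 (this pair also fixes the orientation used
   in the incidence matrix). *)
Definition graph_adj (n eps : nat) (ends : 'I_eps -> 'I_n * 'I_n) : rel 'I_n :=
  fun i j => [exists e, (ends e == (i, j)) || (ends e == (j, i))].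

Definition simple_graph (n eps : nat) (ends : 'I_eps -> 'I_n * 'I_n) : Prop :=
  (forall e, (ends e).1 != (ends e).2) /\
  (forall e e', (ends e == ends e') || (ends e == ((ends e').2, (ends e').1)) ->
     e = e').

Definition connected_graph (n eps : nat) (ends : 'I_eps -> 'I_n * 'I_n) : Prop :=
  forall i j, connect (graph_adj ends) i j.

Definition incidence (n eps : nat) (ends : 'I_eps -> 'I_n * 'I_n) : 'M[R]_(eps, n) :=
  \matrix_(e, i) (((i == (ends e).1)%:R : R) - (i == (ends e).2)%:R).

Definition gradf (n : nat) (f : 'I_n -> R -> R) (x : 'cV[R]_n) : 'cV[R]_n :=
  \col_i (derive1 (f i) (x i 0)).

Definition inner_step (n eps : nat) (f : 'I_n -> R -> R) (A : 'M[R]_(eps, n))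
  (B : 'M[R]_n) (alpha : R) (xk : 'cV[R]_n) (lk : 'cV[R]_eps) (y : 'cV[R]_n)
  : 'cV[R]_n :=
  y - alpha *: gradf f xk - alpha *: (A^T *m lk) - alpha *: (B *m y).

Definition flexpd_step (n eps : nat) (f : 'I_n -> R -> R) (A : 'M[R]_(eps, n))
  (B : 'M[R]_n) (alpha beta : R) (T : nat) (p : 'cV[R]_n * 'cV[R]_eps)
  : 'cV[R]_n * 'cV[R]_eps :=
  let x' := iter T (inner_step f A B alpha p.1 p.2) p.1 in
  (x', p.2 + beta *: (A *m x')).

Definition flexpd (n eps : nat) (f : 'I_n -> R -> R) (A : 'M[R]_(eps, n))
  (B : 'M[R]_n) (alpha beta : R) (T : nat) (x0 : 'cV[R]_n) (k : nat)
  : 'cV[R]_n * 'cV[R]_eps :=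
  iter k (flexpd_step f A B alpha beta T) (x0, 0).

Definition Cmat (n : nat) (B : 'M[R]_n) (alpha : R) (T : nat) : 'M[R]_n :=
  \sum_(t < T) (1%:M - alpha *: B) ^+ t.

Definition Mmat (n : nat) (B : 'M[R]_n) (alpha : R) (T : nat) : 'M[R]_n :=
  invmx (Cmat B alpha T) *m (1%:M - alpha *: B) ^+ T.

Definition Nmat (n : nat) (B : 'M[R]_n) (alpha : R) (T : nat) : 'M[R]_n :=
  alpha^-1 *: (invmx (Cmat B alpha T) - Mmat B alpha T).

End FlexPD.

(* Main.v *)
Require Import Defs.
From HB Require Import structures.
From mathcomp Require Import all_boot all_order all_algebra.
From mathcomp Require Import all_classical all_reals all_analysis.
From mathcomp Require Import lra.
Import Order.TTheory GRing.Theory Num.Theory.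
Local Open Scope ring_scope.

Lemma sum_pow_mulr (Rg : pzRingType) (x : Rg) (k : nat) :
  (\sum_(i < k) x ^+ i) * (x - 1) = x ^+ k - 1.
Proof.
elim: k => [|k IH]; first by rewrite big_ord0 mul0r expr0 subrr.
rewrite big_ord_recr /= mulrDl IH mulrBr mulr1 -exprSr.
by rewrite addrC addrA subrK.
Qed.

Lemma comm_sum_pow (Rg : pzRingType) (x : Rg) (k : nat) :
  x * (\sum_(i < k) x ^+ i) = (\sum_(i < k) x ^+ i) * x.
Proof.
rewrite mulr_sumr mulr_suml; apply: eq_bigr => i _.
by rewrite -exprS exprSr.
Qed.

Definition nrm {R : realType} {n : nat} (u : 'rV[R]_n) : R := (u *m u^T) 0 0.

Lemma nrmE (R : realType) n (u : 'rV[R]_n) : nrm u = \sum_j u 0 j ^+ 2.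
Proof. rewrite /nrm !mxE; apply: eq_bigr => j _; by rewrite mxE expr2. Qed.

Lemma nrm_ge0 (R : realType) n (u : 'rV[R]_n) : 0 <= nrm u.
Proof. rewrite nrmE; apply: sumr_ge0 => j _; exact: sqr_ge0. Qed.

Lemma nrm_eq0 (R : realType) n (u : 'rV[R]_n) : nrm u <= 0 -> u = 0.
Proof.
move=> h; have h0 : nrm u = 0 by apply/eqP; rewrite eq_le h nrm_ge0.
move: h0; rewrite nrmE => /eqP; rewrite psumr_eq0; last by move=> j _; exact: sqr_ge0.
move=> /allP H; apply/rowP => j; rewrite mxE.
have := H j (mem_index_enum j); rewrite /= sqrf_eq0 => /eqP ->; done.
Qed.

Lemma C_kernel (R : realType) n (B : 'M[R]_n) rho alpha T (u : 'rV[R]_n) :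
  B^T = B -> (forall a, eigenvalue B a -> a <= rho) -> (1 <= T)%N ->
  0 < alpha -> alpha < rho^-1 ->
  u *m Cmat B alpha T = 0 -> u = 0.
Proof.
move=> HB Heig HT Ha Har.
rewrite /Cmat; set W := 1%:M - alpha *: B => hC.
have WT : W^T = W by rewrite /W linearB /= trmx1 linearZ /= HB.
have WtT t : (W ^+ t)^T = W ^+ t.
  elim: t => [|t IH]; first by rewrite expr0 trmx1.
  by rewrite exprS -mulmxE trmx_mul IH WT mulmxE -exprSr exprS.
have h1 : u *m W ^+ T = u.
  have E := @sum_pow_mulr _ W T.
  have : u *m (W ^+ T - 1) = 0 by rewrite -E -mulmxE mulmxA hC mul0mx.
  by rewrite mulmxBr mulmx1 => /eqP; rewrite subr_eq0 => /eqP.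
have h2 : u *m W ^+ 2 = u.
  set z := u *m (W ^+ 2 - 1).
  have hz : z *m (\sum_(t < T) (W ^+ 2) ^+ t) = 0.
    rewrite /z -mulmxA mulmxE -subrX1 -exprM mulnC exprM mulmxBr mulmx1.
    by rewrite expr2 -mulmxE mulmxA h1 h1 subrr.
  have hn : (z *m (\sum_(t < T) (W ^+ 2) ^+ t) *m z^T) 0 0 =
            \sum_(t < T) nrm (z *m W ^+ t).
    rewrite mulmx_sumr mulmx_suml summxE; apply: eq_bigr => t _.
    rewrite /nrm [in RHS]trmx_mul WtT -exprM mulnC exprM expr2 -mulmxE !mulmxA //.
  have : nrm z <= 0.
    move: hn; rewrite hz mul0mx mxE.
    case: T HT {h1 hC hz} => // T' _; rewrite big_ord_recl /= expr0 mulmx1.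
    move=> /esym/eqP; rewrite addr_eq0 => /eqP ->.
    rewrite oppr_le0; apply: sumr_ge0 => i _; exact: nrm_ge0.
  move/nrm_eq0; rewrite /z mulmxBr mulmx1 => /eqP; rewrite subr_eq0 => /eqP //.
have h2' : u *m W *m W = u by rewrite -mulmxA mulmxE -expr2.
have inv k : exists a b : nat, (a = b \/ a = b.+1) /\ (a + b = k)%N /\
   u *m (\sum_(i < k) W ^+ i) = a%:R *: u + b%:R *: (u *m W).
  elim: k => [|k [a [b [hab [hs IH]]]]].
    by exists 0%N, 0%N; rewrite big_ord0 mulmx0 !scale0r addr0; split; [left|].
  exists b.+1, a; split; first by case: hab => ->; [right|left].
  split; first by rewrite -hs addSn addnC.
  rewrite big_ord_recl expr0.
  under eq_bigr => i _ do rewrite lift0 exprS.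
  rewrite -mulr_sumr comm_sum_pow mulmxDr mulmx1 -mulmxE mulmxA IH mulmxDl.
  rewrite -!scalemxAl h2' -natr1 scalerDl scale1r.
  by rewrite addrC [RHS]addrC addrA.
have [a [b [hab [hs E]]]] := inv T.
rewrite hC in E.
have E2 : 0 = a%:R *: (u *m W) + b%:R *: u.
  by have := congr1 (fun v => v *m W) E; rewrite /= mul0mx mulmxDl -!scalemxAl h2'.
move: E E2; set y := u *m W => E E2.
case: hab => hab.
  subst a.
  have hb : (0 < b)%N by rewrite -hs addnn double_gt0 in HT.
  have E3 : b%:R *: (u + y) = 0 by rewrite scalerDr E.
  move/eqP: E3; rewrite scaler_eq0 pnatr_eq0 (negbTE (lt0n_neq0 hb)) /= addr_eq0 => /eqP hy.
  case: (eqVneq u 0) => // nz; exfalso.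
  have hev : u *m B = (2 / alpha) *: u.
    have : y = u - alpha *: (u *m B) by rewrite /y /W mulmxBr mulmx1 scalemxAr.
    have hy' : y = - u by rewrite hy opprK.
    rewrite hy' => H.
    have H2 : alpha *: (u *m B) = 2%:R *: u.
      apply/rowP => j; move/rowP: H => /(_ j); rewrite !mxE => H; lra.
    apply: (@scalerI _ _ alpha); first by rewrite gt_eqF.
    by rewrite H2 scalerA mulrCA divff ?gt_eqF // mulr1.
  have := Heig _ (introT eigenvalueP (ex_intro2 _ _ u hev nz)).
  have rp : 0 < rho by rewrite -invr_gt0; apply: lt_trans Har.
  rewrite ler_pdivrMr // => H2.
  move: Har; rewrite -[rho^-1]div1r ltr_pdivlMr // => H3.
  rewrite mulrC in H3; have := le_lt_trans H2 H3; lra.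
subst a.
apply/rowP => j; move/rowP: E => /(_ j); move/rowP: E2 => /(_ j).
rewrite !mxE => e2 e1.
rewrite -natr1 in e1 e2.
move: e1 e2; set s := \sum_j0 _ => e1 e2.
have hxy : u 0 j = s by lra.
rewrite -hxy in e1.
have : (2 * b%:R + 1) * u 0 j = 0 by lra.
move/eqP; rewrite mulf_eq0 => /orP [|/eqP //].
have : 0 <= b%:R :> R by [].
move=> h /eqP h'; lra.
Qed.

Lemma C_unit (R : realType) n (B : 'M[R]_n) rho alpha T :
  B^T = B -> (forall a, eigenvalue B a -> a <= rho) -> (1 <= T)%N ->
  0 < alpha -> alpha < rho^-1 -> Cmat B alpha T \in unitmx.
Proof.
move=> HB Heig HT Ha Har.
rewrite -row_free_unit -kermx_eq0; apply/eqP/row_matrixP => i; rewrite row0.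
apply: (@C_kernel _ _ _ _ _ _ _ HB Heig HT Ha Har).
by rewrite -row_mul mulmx_ker row0.
Qed.

Lemma iter_inner (R : realType) n eps (f : 'I_n -> R -> R) (A : 'M[R]_(eps, n))
  (B : 'M[R]_n) alpha xk lk y t :
  iter t (inner_step f A B alpha xk lk) y =
  (1%:M - alpha *: B) ^+ t *m y
    - alpha *: (Cmat B alpha t *m (gradf f xk + A^T *m lk)).
Proof.
elim: t => [|t IH].
  by rewrite /= expr0 mul1mx /Cmat big_ord0 mul0mx scaler0 subr0.
rewrite iterS IH /inner_step.
set W := 1%:M - alpha *: B.
set g := gradf f xk + A^T *m lk.
set v := W ^+ t *m y - alpha *: (Cmat B alpha t *m g).
have e1 : W *m v = v - alpha *: (B *m v) by rewrite /W mulmxBl mul1mx scalemxAl.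
have e2 : W ^+ t.+1 *m y - alpha *: (Cmat B alpha t.+1 *m g) = W *m v - alpha *: g.
  rewrite /Cmat big_ord_recl expr0 -/W.
  under eq_bigr => i _ do rewrite lift0 exprS.
  rewrite -mulr_sumr /v mulmxBr -scalemxAr exprS [in RHS]mulmxA mulmxDl mul1mx.
  by rewrite [in RHS](mulmxA W) /Cmat scalerDr opprD addrA addrAC.
rewrite e2 e1 /g scalerDr opprD !addrA; rewrite [LHS]addrAC; congr (_ - _); by rewrite addrAC.
Qed.
Theorem lemma3p15 (R : realType) (n eps : nat) (ends : 'I_eps -> 'I_n * 'I_n)
  (f : 'I_n -> R -> R) (m L : R) (B : 'M[R]_n) (rho : R)
  (xs : 'cV[R]_n) (ls : 'cV[R]_eps) (alpha beta : R) (T : nat) (x0 : 'cV[R]_n) :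
  simple_graph ends -> connected_graph ends ->
  0 < m -> m <= L ->
  (forall i x, derivable (f i) x 1 /\ derivable (derive1 (f i)) x 1) ->
  (forall i x, m <= derive1 (derive1 (f i)) x <= L) ->
  B^T = B ->
  (forall v : 'cV[R]_n, 0 <= (v^T *m B *m v) 0 0) ->
  (forall v : 'cV[R]_n, incidence R ends *m v = 0 <-> B *m v = 0) ->
  (forall i j, i != j -> B i j != 0 -> graph_adj ends i j) ->
  eigenvalue B rho -> (forall a, eigenvalue B a -> a <= rho) ->
  (* x* is the unique minimizer of f subject to A x = 0 *)
  incidence R ends *m xs = 0 ->
  (forall x : 'cV[R]_n, incidence R ends *m x = 0 ->
     \sum_i f i (xs i 0) <= \sum_i f i (x i 0)) ->
  (forall x : 'cV[R]_n, incidence R ends *m x = 0 ->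
     \sum_i f i (x i 0) <= \sum_i f i (xs i 0) -> x = xs) ->
  (* lambda* is a Lagrange multiplier in the column space of A *)
  gradf f xs + (incidence R ends)^T *m ls = 0 ->
  B *m xs = 0 ->
  (exists w : 'cV[R]_n, ls = incidence R ends *m w) ->
  0 < beta -> (1 <= T)%N -> 0 < alpha -> alpha < rho^-1 ->
  forall k : nat,
  let A := incidence R ends in
  let xk := (flexpd f A B alpha beta T x0 k).1 in
  let xk1 := (flexpd f A B alpha beta T x0 k.+1).1 in
  let lk1 := (flexpd f A B alpha beta T x0 k.+1).2 in
  alpha *: (gradf f xk - gradf f xs) =
    Mmat B alpha T *m (xk - xk1)
    + alpha *: ((beta *: (A^T *m A) - Nmat B alpha T) *m (xk1 - xs))
    - alpha *: (A^T *m (lk1 - ls)).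
Proof.
move=> _ _ _ _ _ _ HB _ _ _ _ Heig hAxs _ _ hKKT hBxs _ Hb HT Ha Har k A xk xk1 lk1.
have hU := @C_unit _ _ _ _ _ _ HB Heig HT Ha Har.
set W := 1%:M - alpha *: B.
set C := Cmat B alpha T.
set Ci := invmx C.
set M := Mmat B alpha T.
have hM : M = Ci *m W ^+ T by [].
have hCiC : Ci *m C = 1%:M by exact: mulVmx.
have hWxs t : W ^+ t *m xs = xs.
  elim: t => [|t IH]; first by rewrite expr0 mul1mx.
  by rewrite exprSr -mulmxE -mulmxA /W mulmxBl mul1mx -scalemxAl hBxs scaler0 subr0.
have hN v : alpha *: (Nmat B alpha T *m v) = Ci *m v - M *m v.
  by rewrite /Nmat -scalemxAl scalerA mulfV ?gt_eqF // scale1r mulmxBl.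
have hMxs : M *m xs = Ci *m xs by rewrite hM -mulmxA hWxs.
have hGs : gradf f xs = - (A^T *m ls).
  by apply/eqP; rewrite -addr_eq0; apply/eqP.
rewrite /xk1 /lk1 /xk /flexpd iterS /=.
set p := iter k _ (x0, 0).
rewrite iter_inner -/W -/C.
set g := gradf f p.1 + A^T *m p.2.
set X := W ^+ T *m p.1 - alpha *: (C *m g).
have hCX : Ci *m X = M *m p.1 - alpha *: g.
  by rewrite /X mulmxBr hM mulmxA -scalemxAr mulmxA hCiC mul1mx.
have hAxs' : A *m xs = 0 := hAxs.
clearbody X M Ci A.
have eA : (beta *: (A^T *m A) - Nmat B alpha T) *m (X - xs) =
    beta *: (A^T *m (A *m X)) - Nmat B alpha T *m (X - xs).
  by rewrite mulmxBl -scalemxAl mulmxBr -!mulmxA hAxs' mulmx0 subr0.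
rewrite eA (scalerBr alpha (beta *: _)) hN !mulmxBr !mulmxDr hMxs hCX hGs -scalemxAr /g.
move: (gradf f p.1) (A^T *m p.2) (A^T *m ls) (M *m p.1) (M *m X) (A^T *m (A *m X)) (Ci *m xs).
move=> G L1 Ls Mx MX AX Cx.
apply/matrixP => i j; rewrite !mxE; lra.
Qed.
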